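(* Let $m\ge2$ and $n\ge1$ be integers, let $f_i:\mathbb{R}^n\to\mathbb{R}$, $i=1,\dots,m$, be lower semicontinuous, proper and strictly convex, and let $a\ge 0$ and $\mathcal{Z}=\{\mathbf{z}\in\mathbb{R}^n\mid\|\mathbf{z}\|_\infty\le a\}$. Set $\mathcal{Y}=\mathcal{Z}^m\subseteq\mathbb{R}^{nm}$, $f_0(\mathbf{y})=\frac1m\sum_{i=1}^m f_i(\mathbf{y}_i)$ for $\mathbf{y}=[\mathbf{y}_1^{\mathsf T}\ \cdots\ \mathbf{y}_m^{\mathsf T}]^{\mathsf T}$, and $f=f_0+\delta_{\mathcal{Y}}$. Assume that for every $\bar{\mathbf{y}}\in\operatorname{bnd}\mathcal{Y}$ there exist a sequence $(\mathbf{y}_k)$ in $\mathcal{Y}$ with $\mathbf{y}_k\to\bar{\mathbf{y}}$ and subgradients $\boldsymbol{\nu}_k\in\partial f(\mathbf{y}_k)$ with $\limsup_k\|\boldsymbol{\nu}_k\|_2<\infty$. Let $\mathbf{A}\in\mathbb{R}^{n(m-1)\times nm}$ be the block matrix whose $i$-th block row ($i=1,\dots,m-1$) has $\mathbf{I}_n$ in block column $i$, $-\mathbf{I}_n$ in block column $i+1$, and zeros elsewhere. Let $\bar{\mathbf{y}}=[\bar{\mathbf{y}}_1^{\mathsf T}\ \cdots\ \bar{\mathbf{y}}_m^{\mathsf T}]^{\mathsf T}$ with $\bar{\mathbf{y}}_i=a\mathbf{1}_n$ for $i$ odd and $\bar{\mathbf{y}}_i=-a\mathbf{1}_n$ for $i$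 even, and let $\beta>0$. Then there exist $\boldsymbol{\eta}\in\mathbb{R}^{nm}$ and $\boldsymbol{\mu}\in\mathbb{R}^{n(m-1)}$ satisfying $$\mathbf{A}\bar{\mathbf{y}}=\beta(\mathbf{A}\mathbf{A}^{\mathsf T})^{-1}\mathbf{A}\boldsymbol{\eta},\qquad \boldsymbol{\eta}\in N_{\mathcal{Y}}(\bar{\mathbf{y}}),\qquad \mathbf{A}^{\mathsf T}\boldsymbol{\mu}=\boldsymbol{\eta}.$$
   Context: $\delta_{\mathcal{Y}}$ is the indicator function of $\mathcal{Y}$, $\partial$ the convex subdifferential, $N_{\mathcal{Y}}(\bar{\mathbf{y}})$ the normal cone of the convex set $\mathcal{Y}$ at $\bar{\mathbf{y}}$, $\mathbf{1}_n$ the all-ones vector in $\mathbb{R}^n$, $\mathbf{I}_n$ the identity. (This is the feasibility problem associated with the consensus problem: minimize $f_0(\mathbf{y})$ subject to $\mathbf{y}_i\in\mathcal{Z}$ for all $i$ and $\mathbf{A}\mathbf{y}=\mathbf{0}$.) *)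

(* Defs.v *)
From mathcomp Require Import all_boot all_algebra.
From mathcomp Require Import all_classical all_reals all_analysis.
Import GRing.Theory Num.Theory numFieldNormedType.Exports.
Local Open Scope ring_scope.
Local Open Scope classical_set_scope.

Set Implicit Arguments.
Unset Strict Implicit.
Unset Printing Implicit Defensive.

Section Defs.
Variable R : realType.

Definition inner (N : nat) (u v : 'cV[R]_N) : R := \sum_(p < N) u p 0 * v p 0.
Definition norm2 (N : nat) (u : 'cV[R]_N) : R := Num.sqrt (inner u u).

Definition strictly_convex (N : nat) (g : 'cV[R]_N -> R) : Prop :=
  forall (x y : 'cV[R]_N) (t : R), x != y -> 0 < t < 1 ->
    g (t *: x + (1 - t) *: y) < t * g x + (1 - t) * g y.

Definition proper_fun (N : nat) (g : 'cV[R]_N -> \bar R) : Prop :=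
  (forall x, g x != -oo%E) /\ (exists x, g x != +oo%E).

Definition Zbox (n : nat) (a : R) : set 'cV[R]_n :=
  [set z | forall j : 'I_n, `|z j 0| <= a].

Lemma blk_idx_proof (m n : nat) (i : 'I_m) (j : 'I_n) : (i * n + j < m * n)%N.
Proof.
have hi := ltn_ord i; have hj := ltn_ord j.
apply: (@leq_trans (i * n + n)); first by rewrite ltn_add2l.
by rewrite -[X in (_ + X)%N]mul1n -mulnDl addn1 leq_mul2r hi orbT.
Qed.

Definition blk_idx (m n : nat) (i : 'I_m) (j : 'I_n) : 'I_(m * n) :=
  Ordinal (blk_idx_proof i j).

Definition blk (m n : nat) (y : 'cV[R]_(m * n)) (i : 'I_m) : 'cV[R]_n :=
  \col_(j < n) y (blk_idx i j) 0.

Definition Ybox (m n : nat) (a : R) : set 'cV[R]_(m * n) :=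
  [set y | forall i : 'I_m, Zbox a (blk y i)].

Definition f0 (m n : nat) (fs : 'I_m -> 'cV[R]_n -> R) (y : 'cV[R]_(m * n)) : R :=
  (m%:R)^-1 * \sum_(i < m) fs i (blk y i).

Definition indic (N : nat) (C : set 'cV[R]_N) (y : 'cV[R]_N) : \bar R :=
  if `[< C y >] then 0%E else +oo%E.

Definition fcons (m n : nat) (fs : 'I_m -> 'cV[R]_n -> R) (a : R)
  (y : 'cV[R]_(m * n)) : \bar R :=
  ((f0 fs y)%:E + indic (@Ybox m n a) y)%E.

Definition subdiff (N : nat) (g : 'cV[R]_N -> \bar R) (x : 'cV[R]_N) : set 'cV[R]_N :=
  [set nu | g x \is a fin_num /\
            forall z, (g x + (inner nu (z - x))%:E <= g z)%E].

Definition normal_cone (N : nat) (C : set 'cV[R]_N) (x : 'cV[R]_N) : set 'cV[R]_N :=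
  [set eta | C x /\ forall y, C y -> inner eta (y - x) <= 0].

Definition bnd (N : nat) (C : set 'cV[R]_N) : set 'cV[R]_N :=
  closure C `\` interior C.

(* A in R^{n(m-1) x nm}: block row i has I_n at block column i, -I_n at i+1 *)
Definition Acons (m n : nat) : 'M[R]_(m.-1 * n, m * n) :=
  \matrix_(p < m.-1 * n, q < m * n)
    (if (p %% n == q %% n)%N then
       (if (q %/ n == p %/ n)%N then 1
        else if (q %/ n == (p %/ n).+1)%N then -1 else 0)
     else 0).

(* ybar: block i (1-based) equals a 1_n for i odd and -a 1_n for i even;
   with 0-based block index k = q %/ n this is: a if k even, -a if k odd *)
Definition ybar (m n : nat) (a : R) : 'cV[R]_(m * n) :=
  \col_(q < m * n) (if odd (q %/ n) then - a else a).

End Defs.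

Arguments Ybox {R} m n a _.
Arguments Acons {R} m n.
Arguments ybar {R} m n a.

(* Main.v *)
Require Import Defs.
From mathcomp Require Import all_boot all_algebra.
From mathcomp Require Import all_classical all_reals all_analysis.
From mathcomp Require Import zify ring lra.
Import GRing.Theory Num.Theory numFieldNormedType.Exports.
Local Open Scope ring_scope.
Set Implicit Arguments. Unset Strict Implicit.

Section H.
Variable R : realType.

Definition getc N (x : 'cV[R]_N) (k : nat) : R :=
  if (insub k : option 'I_N) is Some q then x q 0 else 0.

Lemma getc_ord N (x : 'cV[R]_N) (q : 'I_N) : getc x q = x q 0.
Proof. by rewrite /getc valK. Qed.

Lemma getc_out N (x : 'cV[R]_N) k : (N <= k)%N -> getc x k = 0.
Proof. by move=> h; rewrite /getc insubN // -leqNgt. Qed.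

Lemma sum_pick N (x : 'cV[R]_N) k :
  \sum_(q < N) ((q : nat) == k)%:R * x q 0 = getc x k.
Proof.
case: (ltnP k N) => hk.
  rewrite (bigD1 (Ordinal hk)) //= eqxx mul1r big1 ?addr0.
    by rewrite -[k]/(nat_of_ord (Ordinal hk)) getc_ord.
  move=> i hi; rewrite (_ : ((i : nat) == k) = false) ?mul0r //.
  apply/negbTE; apply: contra hi => /eqP e; apply/eqP/val_inj => //.
rewrite getc_out // big1 // => i _.
rewrite (_ : ((i : nat) == k) = false) ?mul0r //.
by apply/negbTE; rewrite neq_ltn (leq_trans (ltn_ord i) hk).
all: move=> *; exfalso. all: try by apply: h2; rewrite h4.
all: try by apply: h3; rewrite h4.
all: have e : (q %/ n = (p %/ n).+1)%N by rewrite h5 divnDr ?dvdnn // divnn n0 addn1.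
all: have e2 : (q %% n = p %% n)%N by rewrite h5 modnDr.
all: try by apply: h3.
all: by apply: h1; rewrite e2.
Qed.

Lemma Acons_E m n (p : 'I_(m.-1 * n)) (q : 'I_(m * n)) : (0 < n)%N ->
  @Acons R m n p q = ((q : nat) == p)%:R - ((q : nat) == (p + n)%N)%:R.
Proof.
move=> n0; rewrite mxE.
have := divn_eq q n; have := divn_eq p n.
have := ltn_pmod q n0; have := ltn_pmod p n0.
case: (p %% n =P q %% n)%N => h1; case: (q %/ n =P p %/ n)%N => h2;
  try case: (q %/ n =P (p %/ n).+1)%N => h3;
  case: ((q:nat) =P p) => h4; case: ((q:nat) =P (p+n)%N) => h5;
  rewrite ?subrr ?subr0 ?sub0r //; try lia.

all: move=> *; exfalso. all: try by apply: h2; rewrite h4.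
all: try by apply: h3; rewrite h4.
all: have e : (q %/ n = (p %/ n).+1)%N by rewrite h5 divnDr ?dvdnn // divnn n0 addn1.
all: have e2 : (q %% n = p %% n)%N by rewrite h5 modnDr.
all: try by apply: h3.
all: by apply: h1; rewrite e2.
Qed.

Lemma AmulE m n (x : 'cV[R]_(m * n)) (p : 'I_(m.-1 * n)) : (0 < n)%N ->
  (Acons m n *m x) p 0 = getc x p - getc x (p + n)%N.
Proof.
move=> n0; rewrite mxE; under eq_bigr do rewrite Acons_E // mulrBl.
by rewrite sumrB !sum_pick.
Qed.

Lemma ATmulE m n (w : 'cV[R]_(m.-1 * n)) (q : 'I_(m * n)) : (0 < n)%N ->
  ((Acons m n)^T *m w) q 0 = getc w q - (n <= q)%N%:R * getc w (q - n)%N.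
Proof.
move=> n0; rewrite mxE; under eq_bigr do rewrite mxE Acons_E // mulrBl.
rewrite sumrB; under eq_bigr do rewrite eq_sym.
rewrite sum_pick; congr (_ - _).
case: (leqP n q) => hnq.
  rewrite mul1r -sum_pick; apply: eq_bigr => i _.
  congr (_%:R * _); apply/eqP/eqP; lia.
rewrite mul0r big1 // => i _.
rewrite (_ : ((q : nat) == (i + n)%N) = false) ?mul0r //.
apply/negbTE/eqP; lia.
Qed.

Lemma AT_inj m n (w : 'cV[R]_(m.-1 * n)) : (0 < n)%N ->
  (Acons m n)^T *m w = 0 -> w = 0.
Proof.
move=> n0 H.
suff hk : forall k, getc w k = 0.
  by apply/matrixP => i j; rewrite ord1 -getc_ord hk mxE.
elim/ltn_ind => k IH.
case: (ltnP k (m.-1 * n)) => hk; last by rewrite getc_out.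
have hk' : (k < m * n)%N by apply: leq_trans hk (leq_mul (leq_pred m) (leqnn n)).
have := congr1 (fun M : 'cV[R]_(m * n) => M (Ordinal hk') 0) H.
rewrite ATmulE //= mxE.
case: (leqP n k) => hnk.
  by rewrite (IH (k - n)%N) ?mulr0 ?subr0 //; lia.
by rewrite mul0r subr0.
Qed.

Lemma AAT_unit m n : (0 < n)%N -> (Acons m n *m (Acons m n)^T : 'M[R]_(m.-1 * n)) \in unitmx.
Proof.
move=> n0.
rewrite -row_free_unit -kermx_eq0; apply/eqP/row_matrixP => i; rewrite row0.
set v := row i _.
have hv : v *m (Acons m n *m (Acons m n)^T) = 0 by rewrite -row_mul mulmx_ker row0.
have hu : v *m Acons m n = 0.
  set u := v *m Acons m n.
  have h0 : u *m u^T = 0 by rewrite /u trmx_mul mulmxA -(mulmxA v) hv mul0mx.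
  have := congr1 (fun M : 'M[R]_1 => M 0 0) h0; rewrite !mxE => hs.
  have hpos : forall k : 'I_(m * n), true -> 0 <= u 0 k * u^T k 0.
    by move=> k _; rewrite [u^T k 0]mxE -expr2 sqr_ge0.
  apply/rowP => j; rewrite [RHS]mxE.
  have := psumr_eq0P hpos hs (i:=j) isT.
  by rewrite [u^T j 0]mxE => /eqP; rewrite mulf_eq0 orbb => /eqP.
have : (Acons m n)^T *m v^T = 0 by rewrite -trmx_mul hu trmx0.
move/AT_inj => /(_ n0) hw.
by rewrite -(trmxK v) hw trmx0.
Qed.

Definition yb (n : nat) (a : R) (k : nat) : R := if odd (k %/ n) then - a else a.

Lemma yb_shift n a k : (0 < n)%N -> yb n a (k + n) = - yb n a k.
Proof.
move=> n0; rewrite /yb divnDr ?dvdnn // divnn n0 addn1 /=.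
by case: odd; rewrite ?opprK.
Qed.

Lemma getc_ybar m n a k : (k < m * n)%N -> getc (ybar m n a) k = yb n a k.
Proof. by move=> h; rewrite -[k]/(nat_of_ord (Ordinal h)) getc_ord mxE. Qed.

Lemma getc_mu m n a (beta : R) k : (0 < n)%N ->
  getc (beta^-1 *: (Acons m n *m ybar m n a)) k =
  (k < m.-1 * n)%N%:R * (beta^-1 * 2 * yb n a k).
Proof.
move=> n0; case: (ltnP k (m.-1 * n)) => hk; last by rewrite getc_out // mul0r.
have hk1 : (k < m * n)%N by apply: leq_trans hk (leq_mul (leq_pred m) (leqnn n)).
have hk2 : (k + n < m * n)%N.
  case: m hk {hk1} => [|m'] /=; first by rewrite mul0n.
  by rewrite mulSn; lia.
rewrite -[k]/(nat_of_ord (Ordinal hk)) getc_ord mxE AmulE //= mul1r.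
rewrite !getc_ybar // yb_shift // opprK -mulrA; congr (_ * _).
by rewrite mulr2n mulrDl !mul1r.
Qed.

Lemma ybox_abs m n a (y : 'cV[R]_(m * n)) (q : 'I_(m * n)) : (0 < n)%N ->
  Ybox m n a y -> `|y q 0| <= a.
Proof.
move=> n0 hy.
have hi : (q %/ n < m)%N by rewrite ltn_divLR // ltn_ord.
have hj : (q %% n < n)%N by rewrite ltn_pmod.
have := hy (Ordinal hi) (Ordinal hj); rewrite /blk mxE.
suff -> : blk_idx (Ordinal hi) (Ordinal hj) = q by [].
by apply/val_inj => /=; rewrite -divn_eq.
Qed.

End H.

Local Open Scope classical_set_scope.
Theorem lemma2 (R : realType) (m n : nat) (hm : (2 <= m)%N) (hn : (1 <= n)%N)
  (fs : 'I_m -> 'cV[R]_n -> R)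
  (hlsc : forall i, lower_semicontinuous (fun x => (fs i x)%:E))
  (hproper : forall i, proper_fun (fun x => (fs i x)%:E))
  (hconv : forall i, strictly_convex (fs i))
  (a : R) (ha : 0 <= a)
  (hbnd : forall yb : 'cV[R]_(m * n), bnd (Ybox m n a) yb ->
     exists (y : nat -> 'cV[R]_(m * n)) (nu : nat -> 'cV[R]_(m * n)),
       (forall k, Ybox m n a (y k)) /\
       y @ \oo --> yb /\
       (forall k, subdiff (fcons fs a) (y k) (nu k)) /\
       (limn_esup (fun k => (norm2 (nu k))%:E) < +oo)%E)
  (beta : R) (hbeta : 0 < beta) :
  exists (eta : 'cV[R]_(m * n)) (mu : 'cV[R]_(m.-1 * n)),
    Acons m n *m ybar m n a =
      beta *: (invmx (Acons m n *m (Acons m n)^T) *m Acons m n *m eta) /\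
    normal_cone (Ybox m n a) (ybar m n a) eta /\
    (Acons m n)^T *m mu = eta.
Proof.
have n0 : (0 < n)%N by [].
set mu := beta^-1 *: (Acons m n *m ybar m n a).
exists ((Acons m n)^T *m mu), mu; split; [|split]; last by [].
  rewrite mulmxA -(mulmxA (invmx _)) mulVmx ?AAT_unit // mul1mx /mu.
  by rewrite scalerA mulfV ?scale1r // lt0r_neq0.
split.
  move=> i j; rewrite /blk !mxE; case: ifP => _; rewrite ?normrN ger0_norm //.
move=> y hy; rewrite /inner; apply: sumr_le0 => q _.
rewrite ATmulE // !getc_mu // !mxE.
have hq := ltn_ord q.
have habs := ybox_abs q n0 hy.
rewrite -[yb n a q]/(if odd (q %/ n) then - a else a).
pose c : R := (q < m.-1 * n)%N%:R + (n <= q)%N%:R * (q - n < m.-1 * n)%N%:R.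
have hc : 0 <= c by rewrite /c addr_ge0 // mulr_ge0.
have hb : 0 <= beta^-1 * 2 by rewrite mulr_ge0 // invr_ge0 le0r hbeta orbT.
have -> : (q < m.-1 * n)%N%:R * (beta^-1 * 2 * yb n a q) -
     (n <= q)%N%:R * ((q - n < m.-1 * n)%N%:R * (beta^-1 * 2 * yb n a (q - n))) =
   (beta^-1 * 2 * c) * (if odd (q %/ n) then - a else a).
  case: (leqP n q) => hnq.
    have : yb n a q = - yb n a (q - n) by rewrite -{1}(subnK hnq) yb_shift.
    rewrite /c /yb hnq => ->; rewrite !mul1r; ring.
  by rewrite /c /yb mul0r subr0 (leqNgt n q) hnq mul0r addr0; ring.
move: habs; rewrite ler_norml => /andP [h1 h2].
have hbc : 0 <= beta^-1 * 2 * c by rewrite mulr_ge0.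
rewrite -(mulrA (beta^-1 * 2 * c)); apply: mulr_ge0_le0 => //.
by case: odd; nra.
Qed.
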